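(* Let $\mathcal{G}=(\mathcal{V},\mathcal{E},\mathcal{W})$ be an undirected weighted graph with negative-weight edge set $\mathcal{E}_-$ and positive-weight edge set $\mathcal{E}_+$, and assume $\mathcal{G}_+=(\mathcal{V},\mathcal{E}_+)$ (with its weights) is connected. If $L(\mathcal{G})$ is positive semi-definite, then $$\sum_{k\in\mathcal{E}_-}|\mathcal{W}(k)|^{-1}\ \ge\ \mathbf{R}_{tot}:=\operatorname{trace}\big(E_-^TL^{\dagger}(\mathcal{G}_+)E_-\big)=\sum_{k=(u_k,v_k)\in\mathcal{E}_-}\mathcal{R}_{u_kv_k}(\mathcal{G}_+),$$ where $E_-$ is the incidence matrix of the graph $(\mathcal{V},\mathcal{E}_-)$.
   Context: Weights $\mathcal{W}:\mathcal{E}\to\mathbb{R}\setminus\{0\}$; with an arbitrary edge orientation the incidence matrix has in the column of edge $(i,j)$ entry $+1$ in row $i$, $-1$ in row $j$, $0$ elsewhere; $L(\mathcal{G})=EWE^T$ with $W$ the diagonal weight matrix. $L^{\dagger}$ denotes the Moore–Penrose pseudo-inverse, and the effective resistance is $\mathcal{R}_{uv}(\mathcal{H})=(\mathbf{e}_u-\mathbf{e}_v)^TL^{\dagger}(\mathcal{H})(\mathbf{e}_u-\mathbf{e}_v)$ with $\mathbf{e}_u$ the standard basis vector of node $u$. *)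

(* Defs.v *)
From HB Require Import structures.
From mathcomp Require Import all_boot all_order all_algebra.
From Stdlib Require Import ClassicalEpsilon.
Set Implicit Arguments. Unset Strict Implicit. Unset Printing Implicit Defensive.
Import Order.TTheory GRing.Theory Num.Theory.
Local Open Scope ring_scope.

Definition is_mpinv (R : realFieldType) (n : nat) (A X : 'M[R]_n) : Prop :=
  [/\ A *m X *m A = A, X *m A *m X = X,
      (A *m X)^T = A *m X & (X *m A)^T = X *m A].

Definition mpinv (R : realFieldType) (n : nat) (A : 'M[R]_n) : 'M[R]_n :=
  epsilon (inhabits 0) (fun X => is_mpinv A X).

(* A graph on vertices 'I_n with m edges; edge k joins u k and v k
   (arbitrary orientation u k -> v k). *)

(* Incidence matrix of the sub-graph whose edges are those k with P k:
   column k is e_{u k} - e_{v k} if P k, and 0 otherwise (absent edge). *)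
Definition incidence (R : realFieldType) (n m : nat) (u v : 'I_m -> 'I_n)
  (P : pred 'I_m) : 'M[R]_(n, m) :=
  \matrix_(i, k) (if P k then ((i == u k)%:R - (i == v k)%:R) else 0).

Definition laplacian (R : realFieldType) (n m : nat) (u v : 'I_m -> 'I_n)
  (w : 'I_m -> R) (P : pred 'I_m) : 'M[R]_n :=
  incidence R u v P *m diag_mx (\row_k w k) *m (incidence R u v P)^T.

Definition psd (R : realFieldType) (n : nat) (A : 'M[R]_n) : Prop :=
  forall x : 'cV[R]_n, 0 <= (x^T *m A *m x) 0 0.

Definition adj (n m : nat) (u v : 'I_m -> 'I_n) (P : pred 'I_m) : rel 'I_n :=
  fun x y => [exists k, P k && (((u k == x) && (v k == y)) || ((u k == y) && (v k == x)))].

Definition connected_graph (n m : nat) (u v : 'I_m -> 'I_n) (P : pred 'I_m) : Prop :=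
  forall x y : 'I_n, connect (adj u v P) x y.

Definition evec (R : realFieldType) (n : nat) (i : 'I_n) : 'cV[R]_n := delta_mx i 0.
Arguments evec : clear implicits.

Definition eff_res (R : realFieldType) (n : nat) (L : 'M[R]_n) (a b : 'I_n) : R :=
  ((evec R n a - evec R n b)^T *m mpinv L *m (evec R n a - evec R n b)) 0 0.

(* Main.v *)
Require Import Defs.
From HB Require Import structures.
From mathcomp Require Import all_boot all_order all_algebra.
From mathcomp Require Import ring lra.
Import Order.TTheory GRing.Theory Num.Theory.
Local Open Scope ring_scope.
From Stdlib Require Import ClassicalEpsilon.

Lemma gram_unit {R : realFieldType} {r n} (G : 'M[R]_(r, n)) :
  row_free G -> G *m G^T \in unitmx.
Proof.
move=> fG; rewrite -row_free_unit -kermx_eq0; apply/rowV0P => x /sub_kermxP Hx.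
have Hz : x *m G = 0.
  apply/matrixP => i j; rewrite (ord1 i) mxE.
  have : ((x *m G) *m (x *m G)^T) 0 0 = 0 by rewrite trmx_mul !mulmxA -(mulmxA x) Hx mul0mx mxE.
  rewrite mxE => /eqP; rewrite psumr_eq0 => [/allP H|k _]; last by rewrite !mxE -expr2 sqr_ge0.
  by have := H j (mem_index_enum _); rewrite !mxE -expr2 sqrf_eq0 => /eqP.
by apply/eqP; rewrite -(mulmx_free_eq0 _ fG) Hz.
Qed.

Lemma mpinv_fact {R : realFieldType} {r n} (F : 'M[R]_(n, r)) (G : 'M[R]_(r, n)) :
  G *m G^T \in unitmx -> F^T *m F \in unitmx ->
  exists X, is_mpinv (F *m G) X.
Proof.
move=> uG uF.
set iG := invmx (G *m G^T); set iF := invmx (F^T *m F).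
exists (G^T *m iG *m iF *m F^T).
have AX : (F *m G) *m (G^T *m iG *m iF *m F^T) = F *m iF *m F^T.
  have -> : (F *m G) *m (G^T *m iG *m iF *m F^T) = F *m (G *m G^T *m iG) *m iF *m F^T by rewrite !mulmxA.
  by rewrite mulmxV // mulmx1.
have XA : (G^T *m iG *m iF *m F^T) *m (F *m G) = G^T *m iG *m G.
  have -> : (G^T *m iG *m iF *m F^T) *m (F *m G) = G^T *m iG *m (iF *m (F^T *m F)) *m G by rewrite !mulmxA.
  by rewrite mulVmx // mulmx1.
have iFT : iF^T = iF by rewrite /iF trmx_inv trmx_mul trmxK.
have iGT : iG^T = iG by rewrite /iG trmx_inv trmx_mul trmxK.
split.
- rewrite AX; have -> : F *m iF *m F^T *m (F *m G) = F *m (iF *m (F^T *m F)) *m G by rewrite !mulmxA.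
  by rewrite mulVmx // mulmx1.
- rewrite XA; have -> : G^T *m iG *m G *m (G^T *m iG *m iF *m F^T) = G^T *m (iG *m (G *m G^T)) *m iG *m iF *m F^T by rewrite !mulmxA.
  by rewrite mulVmx // mulmx1.
- by rewrite AX !trmx_mul trmxK iFT mulmxA.
- by rewrite XA !trmx_mul trmxK iGT mulmxA.
Qed.

Lemma mpinv_spec (R : realFieldType) n (A : 'M[R]_n) : is_mpinv A (mpinv A).
Proof.
rewrite /mpinv; apply: (@epsilon_spec _ _ (fun X => is_mpinv A X)).
have uG := gram_unit _ (row_base_free A).
have uF : (col_base A)^T *m col_base A \in unitmx.
  have -> : (col_base A)^T *m col_base A = (col_base A)^T *m (col_base A)^T^T by rewrite trmxK.
  apply: gram_unit; rewrite /row_free mxrank_tr.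
  by have := col_base_full A; rewrite /row_full.
have := mpinv_fact _ _ uG uF; by rewrite mulmx_base.
Qed.

Lemma sum_delta {R : realFieldType} {n} (a : 'I_n) (f : 'I_n -> R) :
  \sum_i (i == a)%:R * f i = f a.
Proof.
rewrite (bigD1 a) //= eqxx mul1r big1 ?addr0 // => i /negbTE ->; by rewrite mul0r.
Qed.

Lemma col_inc {R : realFieldType} {n m} (u v : 'I_m -> 'I_n) (P : pred 'I_m) k :
  incidence R u v P *m delta_mx k 0 =
  if P k then evec R n (u k) - evec R n (v k) else 0.
Proof.
rewrite -colE; apply/matrixP => i j; rewrite (ord1 j) !mxE.
by case: (P k); rewrite ?mxE // !andbT.
Qed.

Lemma trEy {R : realFieldType} {n m} (u v : 'I_m -> 'I_n) (P : pred 'I_m) (y : 'cV[R]_n) k :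
  ((incidence R u v P)^T *m y) k 0 = if P k then y (u k) 0 - y (v k) 0 else 0.
Proof.
rewrite mxE; under eq_bigr do rewrite !mxE.
case: (P k); last by rewrite big1 // => i _; rewrite mul0r.
under eq_bigr do rewrite mulrBl.
by rewrite sumrB !sum_delta.
Qed.

Lemma bTy {R : realFieldType} {n} (a c : 'I_n) (y : 'cV[R]_n) :
  ((evec R n a - evec R n c)^T *m y) 0 0 = y a 0 - y c 0.
Proof.
rewrite mxE; under eq_bigr do rewrite !mxE !andbT mulrBl.
by rewrite sumrB !sum_delta.
Qed.

Lemma quad_lap {R : realFieldType} {n m} (u v : 'I_m -> 'I_n) (w : 'I_m -> R)
  (P : pred 'I_m) (y : 'cV[R]_n) :
  (y^T *m laplacian u v w P *m y) 0 0 =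
  \sum_k (if P k then w k * (y (u k) 0 - y (v k) 0) ^+ 2 else 0).
Proof.
rewrite /laplacian.
set E := incidence R u v P.
have -> : y^T *m (E *m diag_mx (\row_k w k) *m E^T) *m y =
   (E^T *m y)^T *m diag_mx (\row_k w k) *m (E^T *m y)
  by rewrite trmx_mul trmxK !mulmxA.
rewrite mxE; apply: eq_bigr => k _.
rewrite mul_mx_diag [in LHS]mxE [(E^T *m y)^T 0 k]mxE [(\row__ _) 0 k]mxE.
rewrite (trEy u v P y k).
case: ifP => _; last by rewrite !mul0r.
ring.
Qed.

Lemma entry_delta {R : realFieldType} {m n} (B : 'M[R]_(m, n)) i j :
  (delta_mx (0 : 'I_1) i *m B *m delta_mx j (0 : 'I_1)) 0 0 = B i j.
Proof. by rewrite -rowE -colE !mxE. Qed.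
Lemma fix_pos {R : realFieldType} {n m} (u v : 'I_m -> 'I_n) (w : 'I_m -> R)
  (X : 'M[R]_n) :
  let Lp := laplacian u v w (fun k => 0 < w k) in
  Lp *m X *m Lp = Lp ->
  forall k, 0 < w k ->
  Lp *m X *m (evec R n (u k) - evec R n (v k)) = evec R n (u k) - evec R n (v k).
Proof.
move=> Lp hL.
set Ep := incidence R u v (fun k => 0 < w k).
set W := diag_mx (\row_k w k).
set Pm := Lp *m X.
set D : 'M[R]_(n, m) := Pm *m Ep - Ep.
have DT : D^T = Ep^T *m (Pm^T - 1%:M) by rewrite /D linearB /= trmx_mul mulmxBr mulmx1.
have DWE : D *m W *m Ep^T = 0.
  rewrite /D !mulmxBl.
  have -> : Pm *m Ep *m W *m Ep^T = Pm *m Lp by rewrite /Lp /laplacian !mulmxA.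
  by rewrite /Pm hL /Lp /laplacian subrr.
have DWD : D *m W *m D^T = 0 by rewrite DT mulmxA DWE mul0mx.
have Dcol : forall k, D *m delta_mx k (0:'I_1) = Pm *m (Ep *m delta_mx k (0:'I_1)) - Ep *m delta_mx k (0:'I_1).
  by move=> k; rewrite /D mulmxBl mulmxA.
have Dnp : forall i k, ~~ (0 < w k) -> D i k = 0.
  move=> i k hk; have := Dcol k; rewrite /Ep col_inc (negbTE hk) mulmx0 subr0 -colE.
  by move/matrixP => /(_ i 0); rewrite !mxE.
have Dpos : forall i k, 0 < w k -> D i k = 0.
  move=> i k hk.
  have := DWD; move/matrixP => /(_ i i); rewrite mxE mxE.
  move/eqP; rewrite psumr_eq0 => [/allP /(_ k (mem_index_enum _))|j _].
    rewrite /W mul_mx_diag !mxE /= -mulrA mulrCA -expr2 mulf_eq0 sqrf_eq0 (negbTE (lt0r_neq0 hk)) /=.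
    by move/eqP.
  rewrite /W mul_mx_diag mxE [(\row__ _) 0 j]mxE [D^T j i]mxE; have [hj|hj] := boolP (0 < w j).
    by rewrite mulrAC -expr2 mulr_ge0 ?sqr_ge0 // ltW.
  by rewrite Dnp // !mul0r.
move=> k hk.
have := Dcol k; rewrite /Ep col_inc hk.
have -> : D *m delta_mx k (0:'I_1) = 0.
  by rewrite -colE; apply/matrixP => i j; rewrite mxE [in RHS]mxE Dpos.
by move/eqP; rewrite eq_sym subr_eq0 => /eqP; rewrite /Pm.
Qed.

Lemma fix_conn {R : realFieldType} {n m} (u v : 'I_m -> 'I_n) (P : pred 'I_m)
  (Pm : 'M[R]_n) :
  (forall k, P k -> Pm *m (evec R n (u k) - evec R n (v k)) = evec R n (u k) - evec R n (v k)) ->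
  forall x y, connect (adj u v P) x y ->
  Pm *m (evec R n x - evec R n y) = evec R n x - evec R n y.
Proof.
move=> hP x y /connectP [p pth ->] {y}.
elim: p x pth => [|z p IH] x /=; first by rewrite subrr mulmx0.
case/andP => axz pz.
have -> : evec R n x - evec R n (last z p) =
   (evec R n x - evec R n z) + (evec R n z - evec R n (last z p)) by rewrite addrA subrK.
rewrite mulmxDr IH //; congr (_ + _).
case/existsP: axz => k /andP [Pk /orP [/andP [/eqP ux /eqP vz]|/andP [/eqP uz /eqP vx]]].
  by rewrite -ux -vz hP.
by rewrite -opprB mulmxN -uz -vx hP.
Qed.

Theorem corollary3 (R : realFieldType) (n m : nat)
  (u v : 'I_m -> 'I_n) (w : 'I_m -> R)
  (Hloop : forall k, u k != v k)
  (Hsimple : forall k l, k != l ->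
     (u k, v k) != (u l, v l) /\ (u k, v k) != (v l, u l))
  (Hw : forall k, w k != 0)
  (Hconn : connected_graph u v (fun k => 0 < w k))
  (Hpsd : psd (laplacian u v w predT)) :
  let Lp := laplacian u v w (fun k => 0 < w k) in
  let Em := incidence R u v (fun k => w k < 0) in
  \tr (Em^T *m mpinv Lp *m Em) = \sum_(k | w k < 0) eff_res Lp (u k) (v k) /\
  \tr (Em^T *m mpinv Lp *m Em) <= \sum_(k | w k < 0) `|w k|^-1.
Proof.
move=> Lp Em.
have Htr : \tr (Em^T *m mpinv Lp *m Em) = \sum_(k | w k < 0) eff_res Lp (u k) (v k).
  rewrite /mxtrace [in RHS]big_mkcond /=; apply: eq_bigr => k _.
  rewrite -entry_delta.
  have -> : delta_mx (0:'I_1) k *m (Em^T *m mpinv Lp *m Em) *m delta_mx k (0:'I_1)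
     = (Em *m delta_mx k (0:'I_1))^T *m mpinv Lp *m (Em *m delta_mx k (0:'I_1)).
    by rewrite trmx_mul trmx_delta !mulmxA.
  rewrite /Em col_inc; case: ifP => _ //.
  by rewrite trmx0 mul0mx mul0mx mxE.
split => //; rewrite Htr; apply: ler_sum => k hk.
have [h1 _ _ _] := mpinv_spec R n Lp.
set X := mpinv Lp.
have hfix := fix_conn u v (fun k => 0 < w k) (Lp *m X) (fix_pos u v w X h1) (u k) (v k) (Hconn (u k) (v k)).
set b := evec R n (u k) - evec R n (v k).
set y := X *m b.
have Ly : Lp *m y = b by rewrite /y mulmxA.
set d := eff_res Lp (u k) (v k).
have dE : d = y (u k) 0 - y (v k) 0 by rewrite /d /eff_res -/X -/b -mulmxA -/y bTy.
have qp : (y^T *m Lp *m y) 0 0 = d.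
  rewrite -mulmxA Ly.
  have -> : y^T *m b = (b^T *m y)^T by rewrite [RHS]trmx_mul trmxK.
  by rewrite mxE bTy dE.
have q := Hpsd y.
rewrite quad_lap in q.
rewrite quad_lap in qp.
have split_sum : \sum_j (if predT j then w j * (y (u j) 0 - y (v j) 0) ^+ 2 else 0)
   = \sum_j (if 0 < w j then w j * (y (u j) 0 - y (v j) 0) ^+ 2 else 0)
   + \sum_j (if 0 < w j then 0 else w j * (y (u j) 0 - y (v j) 0) ^+ 2).
  by rewrite -big_split /=; apply: eq_bigr => j _; case: ifP; rewrite ?addr0 ?add0r.
rewrite split_sum qp (bigD1 k) //= in q.
have hk' : (0 < w k) = false by apply/negbTE; rewrite -leNgt ltW.
rewrite hk' -dE in q.
have rest : \sum_(j | j != k) (if 0 < w j then 0 else w j * (y (u j) 0 - y (v j) 0) ^+ 2) <= 0.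
  apply: sumr_le0 => j _; case: ifP => // /negbT; rewrite -leNgt => hj.
  by rewrite mulr_le0_ge0 // sqr_ge0.
have q2 : 0 <= d + w k * d ^+ 2 by lra.
rewrite ltr0_norm //.
set c := - w k.
have cpos : 0 < c by rewrite /c oppr_gt0.
have q3 : 0 <= d - c * d ^+ 2 by rewrite /c mulNr opprK.
rewrite -[c^-1]mul1r ler_pdivlMr //.
nra.
Qed.
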